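(* Let $b,w,n$ be positive integers. There exists a coupling $(X,Y)$ with $X\sim\mathrm{Pclas}(b,w,n)$ and $Y\sim\mathrm{Beta}(w,b)$ such that almost surely $$|X-nY|<\frac{b(4w+b+1)}{2}.$$
   Context: $\mathrm{Pclas}(b,w,n)$ denotes the distribution of the number of white balls in a classical Pólya urn after $n$ completed draws, starting with $b$ black and $w$ white balls: at each draw a uniformly random ball is drawn and returned together with one additional ball of the same color. $\mathrm{Beta}(a,b)$ has density proportional to $x^{a-1}(1-x)^{b-1}$ on $(0,1)$. *)

(* Defs.v *)
From Stdlib Require Import Reals Lra Lia Factorial.
Open Scope R_scope.

(* pclas b w n k = P(X = k), X = number of white balls in a classical Polya
   urn after n completed draws, starting from b black and w white balls.
   After n draws the urn has b + w + n balls; from a state with j white balls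
   the next draw is white with probability j / (b + w + n) and then j -> j+1. *)
Fixpoint pclas (b w n k : nat) : R :=
  match n with
  | O => if Nat.eqb k w then 1 else 0
  | S m =>
      let tot := INR (b + w + m) in
      (match k with
       | O => 0
       | S j => pclas b w m j * INR j / tot
       end)
      + pclas b w m k * (tot - INR k) / tot
  end.

Definition beta_dens (a c : nat) (x : R) : R :=
  x ^ (a - 1) * (1 - x) ^ (c - 1)
  * (INR (Factorial.fact (a + c - 1)) / (INR (Factorial.fact (a - 1)) * INR (Factorial.fact (c - 1)))).

(* A coupling (X,Y) with X ~ Pclas(b,w,n) (values in {0,...,w+n}) and
   Y ~ Beta(w,b), described through the sub-densities
   g k y = density of Y on the event {X = k}. *)
Definition pclas_beta_coupling_with_bound (b w n : nat) (c : R) : Prop :=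
  exists g : nat -> R -> R,
    (forall k y, 0 <= g k y) /\
    (forall k, (k <= w + n)%nat ->
       exists pr : Riemann_integrable (g k) 0 1, RiemannInt pr = pclas b w n k) /\
    (forall y, 0 < y < 1 -> sum_f_R0 (fun k => g k y) (w + n) = beta_dens w b y) /\
    (forall k y, (k <= w + n)%nat -> 0 < y < 1 -> g k y <> 0 ->
       Rabs (INR k - INR n * y) < c).

(* Main.v *)
Require Import Defs.
From Stdlib Require Import Reals Lra Lia Arith.
From Coquelicot Require Import Coquelicot.
Open Scope R_scope.

Lemma INR_pos (n : nat) : (0 < n)%nat -> 0 < INR n.
Proof. intro; apply lt_0_INR; lia. Qed.

Lemma pclas_zero_hi b w n : forall k, (w + n < k)%nat -> pclas b w n k = 0.
Proof.
  induction n as [|n IH]; intros k Hk; simpl.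
  - destruct (Nat.eqb_spec k w); [lia | reflexivity].
  - destruct k as [|j]; [lia|].
    rewrite (IH j) by lia. rewrite (IH (S j)) by lia. lra.
Qed.

Lemma pclas_nonneg b w (hb : (0 < b)%nat) n : forall k, 0 <= pclas b w n k.
Proof.
  induction n as [|n IH]; intros k; simpl.
  - destruct (Nat.eqb k w); lra.
  - assert (Ht : 0 < INR (b + w + n)) by (apply INR_pos; lia).
    assert (H2 : 0 <= pclas b w n k * (INR (b + w + n) - INR k) / INR (b + w + n)).
    { destruct (le_lt_dec k (w + n)) as [Hk|Hk].
      - assert (INR k <= INR (b + w+n)) by (apply le_INR; lia).
        apply Rmult_le_pos; [|left; apply Rinv_0_lt_compat; lra].
        apply Rmult_le_pos; [apply IH|]. lra.
      - rewrite pclas_zero_hi by lia. unfold Rdiv. rewrite !Rmult_0_l. lra. }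
    destruct k as [|j].
    + lra.
    + assert (0 <= pclas b w n j * INR j / INR (b + w + n)).
      { apply Rmult_le_pos; [apply Rmult_le_pos; [apply IH | apply pos_INR]|].
        left; apply Rinv_0_lt_compat; lra. }
      lra.
Qed.

Definition Cum b w n k := sum_f_R0 (pclas b w n) k.

Lemma Cum_rec b w n k : (0 < b + w + n)%nat ->
  Cum b w (S n) k = Cum b w n k - pclas b w n k * INR k / INR (b + w + n).
Proof.
  intro Hp. assert (Ht : 0 < INR (b + w + n)) by (apply INR_pos; lia).
  unfold Cum. induction k as [|k IH].
  - simpl. field. lra.
  - assert (E: pclas b w (S n) (S k) = pclas b w n k * INR k / INR (b+w+n)
       + pclas b w n (S k) * (INR (b+w+n) - INR (S k)) / INR (b+w+n)) by reflexivity.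
    rewrite !tech5, IH, E, S_INR. field. lra.
Qed.

Lemma Cum0 b w k : Cum b w 0 k = if Nat.leb w k then 1 else 0.
Proof.
  unfold Cum. induction k as [|k IH].
  - simpl. destruct w; simpl; reflexivity.
  - rewrite tech5, IH. change (pclas b w 0 (S k)) with (if Nat.eqb (S k) w then 1 else 0). destruct (Nat.eqb_spec (S k) w) as [E|E].
    + subst w. rewrite (proj2 (Nat.leb_gt (S k) k)) by lia.
      rewrite Nat.leb_refl. lra.
    + destruct (Nat.leb_spec w k); destruct (Nat.leb_spec w (S k)); try lia; lra.
Qed.

Lemma Cum_one b w (hb : (0<b)%nat) n : forall k, (w + n <= k)%nat -> Cum b w n k = 1.
Proof.
  induction n as [|n IH]; intros k Hk.
  - rewrite Cum0. destruct (Nat.leb_spec w k); [reflexivity|lia].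
  - rewrite Cum_rec by lia. rewrite pclas_zero_hi by lia. rewrite IH by lia. lra.
Qed.

Lemma Cum_mono b w (hb : (0<b)%nat) n k d : Cum b w n k <= Cum b w n (k + d).
Proof.
  induction d as [|d IH].
  - rewrite Nat.add_0_r; lra.
  - replace (k + S d)%nat with (S (k + d)) by lia. unfold Cum in *. simpl.
    pose proof (pclas_nonneg b w hb n (S (k + d))). lra.
Qed.

Lemma Cum_bounds b w (hb : (0<b)%nat) n k : 0 <= Cum b w n k <= 1.
Proof.
  split.
  - pose proof (Cum_mono b w hb n 0 k). simpl in H. unfold Cum in *. simpl in *.
    pose proof (pclas_nonneg b w hb n 0). lra.
  - pose proof (Cum_mono b w hb n k (w + n)). rewrite (Cum_one b w hb n (k + (w+n))) in H by lia. lra.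
Qed.

Fixpoint BT (p : R) (r need : nat) : R :=
  match r with
  | O => if Nat.eqb need 0 then 1 else 0
  | S r' => p * BT p r' (pred need) + (1 - p) * BT p r' need
  end.

Fixpoint D (r N K need : nat) : R :=
  match r with
  | O => if Nat.eqb need 0 then 1 else 0
  | S r' => INR K / INR N * D r' (pred N) (pred K) (pred need)
            + (1 - INR K / INR N) * D r' (pred N) K need
  end.

Lemma BT_0 p r : BT p r 0 = 1.
Proof. induction r; simpl; [reflexivity| rewrite IHr; ring]. Qed.

Lemma BT_anti p (hp : 0 <= p <= 1) r : forall j, BT p r (S j) <= BT p r j.
Proof.
  induction r as [|r IH]; intro j; simpl.
  - destruct (Nat.eqb j 0); lra.
  - assert (H1 : BT p r j <= BT p r (pred j)).
    { destruct j; simpl; [lra| apply IH]. }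
    pose proof (IH j).
    assert (p * BT p r j <= p * BT p r (pred j)) by (apply Rmult_le_compat_l; lra).
    assert ((1-p) * BT p r (S j) <= (1-p) * BT p r j) by (apply Rmult_le_compat_l; lra).
    lra.
Qed.

Lemma BT_pred p (hp : 0 <= p <= 1) r j : BT p r j <= BT p r (pred j).
Proof. destruct j; simpl; [lra | apply BT_anti; auto]. Qed.

Lemma D_le_BT p (hp : 0 <= p <= 1) r : forall N K need, (r <= N)%nat ->
  INR K <= p * (INR N - INR r + 1) -> D r N K need <= BT p r need.
Proof.
  induction r as [|r IH]; intros N K need HrN HK; simpl.
  - lra.
  - destruct N as [|N]; [lia|]. simpl pred.
    rewrite !S_INR in HK.
    assert (HN : 0 < INR (S N)) by (apply INR_pos; lia).
    assert (HNr : INR r <= INR N) by (apply le_INR; lia).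
    assert (Hq0 : 0 <= INR K / INR (S N)).
    { apply Rmult_le_pos; [apply pos_INR| left; apply Rinv_0_lt_compat; lra]. }
    assert (Hqp : INR K / INR (S N) <= p).
    { apply (Rmult_le_reg_r (INR (S N))); [lra|]. unfold Rdiv.
      rewrite Rmult_assoc, Rinv_l by lra. rewrite S_INR. pose proof (pos_INR r). nra. }
    assert (HA : D r N (pred K) (pred need) <= BT p r (pred need)).
    { apply IH; [lia|]. assert (INR (pred K) <= INR K) by (apply le_INR; lia). lra. }
    assert (HB : D r N K need <= BT p r need).
    { apply IH; [lia|]. lra. }
    pose proof (BT_pred p hp r need).
    set (q := INR K / INR (S N)) in *.
    assert (q * D r N (pred K) (pred need) <= q * BT p r (pred need)) by (apply Rmult_le_compat_l; lra).
    assert ((1-q) * D r N K need <= (1-q) * BT p r need) by (apply Rmult_le_compat_l; lra).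
    assert ((p - q) * (BT p r (pred need) - BT p r need) >= 0) by nra.
    nra.
Qed.

Lemma BT_le_D p (hp : 0 <= p <= 1) r : forall N K need, (r <= N)%nat -> (K <= N)%nat ->
  p * (INR N - INR r + 1) <= INR K - INR r + 1 -> BT p r need <= D r N K need.
Proof.
  induction r as [|r IH]; intros N K need HrN HKN HK; simpl.
  - lra.
  - destruct N as [|N]; [lia|]. simpl pred.
    rewrite !S_INR in HK.
    assert (HN : 0 < INR (S N)) by (apply INR_pos; lia).
    assert (HNr : INR r <= INR N) by (apply le_INR; lia).
    assert (HKN' : INR K <= INR (S N)) by (apply le_INR; lia).
    assert (Hq1 : INR K / INR (S N) <= 1).
    { apply (Rmult_le_reg_r (INR (S N))); [lra|]. unfold Rdiv.
      rewrite Rmult_assoc, Rinv_l by lra. lra. }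
    assert (Hqp : p <= INR K / INR (S N)).
    { apply (Rmult_le_reg_r (INR (S N))); [lra|]. unfold Rdiv.
      rewrite Rmult_assoc, Rinv_l by lra. rewrite S_INR. pose proof (pos_INR r). nra. }
    pose proof (BT_pred p hp r need).
    set (q := INR K / INR (S N)) in *.
    assert (Hpq : (q - p) * (BT p r (pred need) - BT p r need) >= 0) by nra.
    destruct K as [|K].
    +
      assert (Hq : q = 0) by (unfold q; simpl; unfold Rdiv; ring).
      assert (HB : BT p r need <= D r N 0 need).
      { apply IH; [lia|lia|]. simpl in *. nra. }
      rewrite Hq in *. nra.
    + assert (HA : BT p r (pred need) <= D r N (pred (S K)) (pred need)).
      { apply IH; [lia|lia|]. simpl pred. rewrite S_INR in HK. lra. }
      destruct (Nat.eq_dec (S K) (S N)) as [E|E].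
      * assert (Hq : q = 1) by (unfold q; rewrite E; field; lra).
        rewrite Hq in *. nra.
      * assert (HB : BT p r need <= D r N (S K) need).
        { apply IH; [lia|lia|]. lra. }
        assert (q * BT p r (pred need) <= q * D r N (pred (S K)) (pred need)).
        { apply Rmult_le_compat_l; [|lra]. unfold q. apply Rmult_le_pos; [apply pos_INR| left; apply Rinv_0_lt_compat; lra]. }
        assert ((1-q) * BT p r need <= (1-q) * D r N (S K) need) by (apply Rmult_le_compat_l; lra).
        nra.
Qed.

Lemma D_rem r : forall N K need, (r <= N)%nat ->
  D r (S N) K need = INR K / INR (S N) * D r N (pred K) need
                     + (1 - INR K / INR (S N)) * D r N K need.
Proof.
  induction r as [|r IH]; intros N K need HrN.
  - simpl. ring.
  - destruct N as [|N]; [lia|].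
    change (D (S r) (S (S N)) K need) with
      (INR K / INR (S (S N)) * D r (S N) (pred K) (pred need)
       + (1 - INR K / INR (S (S N))) * D r (S N) K need).
    change (D (S r) (S N) (pred K) need) with
      (INR (pred K) / INR (S N) * D r N (pred (pred K)) (pred need)
       + (1 - INR (pred K) / INR (S N)) * D r N (pred K) need).
    change (D (S r) (S N) K need) with
      (INR K / INR (S N) * D r N (pred K) (pred need)
       + (1 - INR K / INR (S N)) * D r N K need).
    rewrite (IH N (pred K) (pred need)) by lia.
    rewrite (IH N K need) by lia.
    assert (HN : 0 < INR (S N)) by (apply INR_pos; lia).
    rewrite !S_INR in *.
    destruct K as [|K].
    + simpl. field. lra.
    + simpl pred. rewrite S_INR. field. lra.
Qed.

Lemma D_full r : forall K need, (K <= r)%nat ->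
  D r r K need = if Nat.leb need K then 1 else 0.
Proof.
  induction r as [|r IH]; intros K need HK.
  - simpl. destruct K; [|lia]. destruct need; reflexivity.
  - change (D (S r) (S r) K need) with
      (INR K / INR (S r) * D r r (pred K) (pred need)
       + (1 - INR K / INR (S r)) * D r r K need).
    assert (HN : 0 < INR (S r)) by (apply INR_pos; lia).
    rewrite (IH (pred K)) by lia.
    destruct (Nat.eq_dec K (S r)) as [E|E].
    + subst K. simpl pred.
      replace (1 - INR (S r) / INR (S r)) with 0 by (field; lra).
      replace (INR (S r) / INR (S r)) with 1 by (field; lra).
      destruct need; simpl; [ring|].
      destruct (Nat.leb need r); ring.
    + rewrite (IH K) by lia.
      destruct K as [|K].
      * simpl pred. change (INR 0) with 0. unfold Rdiv. rewrite !Rmult_0_l, Rminus_0_r. destruct need; simpl; ring.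
      * simpl pred. destruct need; simpl Nat.leb.
        { ring. }
        { destruct (Nat.leb need K); ring. }
Qed.

Lemma link b w (hb : (0 < b)%nat) (hw : (0 < w)%nat) : forall n k,
  (k <= n + (b + w - 1))%nat -> Cum b w n k = D (b + w - 1) (n + (b + w - 1)) k w.
Proof.
  set (m := (b + w - 1)%nat).
  induction n as [|n IH]; intros k Hk.
  - rewrite Cum0. simpl. rewrite D_full by (unfold m in *; lia). reflexivity.
  - rewrite Cum_rec by lia.
    replace (S n + m)%nat with (S (n + m)) by lia.
    rewrite D_rem by lia.
    replace (INR (S (n + m))) with (INR (b + w + n)) by (f_equal; unfold m; lia).
    assert (HT : 0 < INR (b + w + n)) by (apply INR_pos; lia).
    destruct k as [|j].
    + rewrite IH by lia. change (INR 0) with 0. unfold Rdiv. ring.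
    + assert (Hp : pclas b w n (S j) = Cum b w n (S j) - Cum b w n j) by (unfold Cum; rewrite tech5; ring).
      simpl pred. rewrite <- (IH j) by lia.
      destruct (Nat.eq_dec (S j) (S (n + m))) as [E|E].
      * assert (Hz : pclas b w n (S j) = 0) by (apply pclas_zero_hi; unfold m in *; lia).
        rewrite Hz. unfold Cum at 1. rewrite tech5. fold (Cum b w n j). rewrite Hz.
        replace (INR (S j)) with (INR (b + w + n)) by (f_equal; unfold m in *; lia).
        field. lra.
      * rewrite <- (IH (S j)) by lia. rewrite Hp. field. lra.
Qed.

Definition dBT (p : R) (r need : nat) : R :=
  match need with
  | O => 0
  | S j => INR r * (BT p (pred r) j - BT p (pred r) (S j))
  end.

Lemma dpl_eq f x l l' : derivable_pt_lim f x l -> l = l' -> derivable_pt_lim f x l'.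
Proof. intros H E; subst; exact H. Qed.

Lemma BT_deriv r : forall need p, derivable_pt_lim (fun q => BT q r need) p (dBT p r need).
Proof.
  induction r as [|r IH]; intros need p.
  - simpl. apply dpl_eq with 0; [apply derivable_pt_lim_const|].
    destruct need; simpl; ring.
  - simpl BT.
    assert (H1 : derivable_pt_lim (fun q => q * BT q r (pred need)) p
                  (1 * BT p r (pred need) + p * dBT p r (pred need))).
    { apply (derivable_pt_lim_mult id (fun q => BT q r (pred need))).
      apply derivable_pt_lim_id. apply IH. }
    assert (H2 : derivable_pt_lim (fun q => 1 - q) p (0 - 1)).
    { apply (derivable_pt_lim_minus (fun _ => 1) id). apply derivable_pt_lim_const. apply derivable_pt_lim_id. }
    assert (H3 : derivable_pt_lim (fun q => (1 - q) * BT q r need) p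
                  ((0 - 1) * BT p r need + (1 - p) * dBT p r need)).
    { apply (derivable_pt_lim_mult (fun q => 1 - q) (fun q => BT q r need)). exact H2. apply IH. }
    eapply dpl_eq.
    { apply (derivable_pt_lim_plus (fun q => q * BT q r (pred need)) (fun q => (1 - q) * BT q r need)); eauto. }
    destruct need as [|j]; simpl pred.
    + unfold dBT. ring.
    + unfold dBT. destruct r as [|r'].
      * simpl pred. destruct j; simpl BT; simpl INR; ring.
      * simpl pred. destruct j as [|i].
        { simpl BT. rewrite !BT_0. rewrite !S_INR. ring. }
        { simpl BT. rewrite !S_INR. ring. }
Qed.

Lemma BT_zero_hi p r : forall j, (r < j)%nat -> BT p r j = 0.
Proof.
  induction r as [|r IH]; intros j Hj; simpl.
  - destruct (Nat.eqb_spec j 0); [lia|reflexivity].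
  - rewrite !IH by lia. ring.
Qed.

Lemma C_n_0 n : Binomial.C n 0 = 1.
Proof. unfold Binomial.C. rewrite Nat.sub_0_r. simpl. field. apply INR_fact_neq_0. Qed.

Lemma C_n_n n : Binomial.C n n = 1.
Proof. unfold Binomial.C. rewrite Nat.sub_diag. simpl. field. apply INR_fact_neq_0. Qed.

Lemma BT_E p r : forall j, (j <= r)%nat ->
  BT p r j - BT p r (S j) = Binomial.C r j * p ^ j * (1 - p) ^ (r - j).
Proof.
  induction r as [|r IH]; intros j Hj.
  - destruct j; [|lia]. simpl. unfold Binomial.C. simpl. field.
  - destruct j as [|i].
    + simpl BT. rewrite !BT_0. rewrite C_n_0.
      assert (E := IH 0%nat ltac:(lia)). rewrite BT_0, C_n_0 in E.
      replace (S r - 0)%nat with (S r) by lia. replace (r - 0)%nat with r in E by lia.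
      simpl pow. simpl pred. nra.
    + change (BT p (S r) (S i) - BT p (S r) (S (S i))) with
        ((p * BT p r i + (1-p) * BT p r (S i)) - (p * BT p r (S i) + (1-p) * BT p r (S (S i)))).
      destruct (Nat.eq_dec i r) as [E|E].
      * subst i. rewrite (BT_zero_hi p r (S r)) by lia. rewrite (BT_zero_hi p r (S (S r))) by lia.
        assert (E1 := IH r ltac:(lia)). rewrite (BT_zero_hi p r (S r)) in E1 by lia.
        rewrite Nat.sub_diag in E1. replace (S r - S r)%nat with 0%nat by lia.
        rewrite C_n_n in *. simpl pow in *. nra.
      * assert (E1 := IH i ltac:(lia)). assert (E2 := IH (S i) ltac:(lia)).
        rewrite <- pascal by lia.
        replace (S r - S i)%nat with (r - i)%nat by lia.
        replace (r - i)%nat with (S (r - S i)) in * by lia.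
        simpl pow in *. nra.
Qed.

Lemma dBT_beta p b w : (0 < b)%nat -> (0 < w)%nat ->
  dBT p (b + w - 1) w = beta_dens w b p.
Proof.
  intros hb hw. destruct w as [|w']; [lia|]. destruct b as [|b']; [lia|].
  unfold dBT, beta_dens.
  replace (S b' + S w' - 1)%nat with (S (b' + w')) by lia.
  simpl pred. rewrite BT_E by lia.
  replace (S w' - 1)%nat with w' by lia.
  replace (S b' - 1)%nat with b' by lia.
  replace (S w' + S b' - 1)%nat with (S (b' + w')) by lia.
  replace (b' + w' - w')%nat with b' by lia.
  unfold Binomial.C. replace (b' + w' - w')%nat with b' by lia.
  assert (0 < INR (fact w')) by (apply INR_fact_lt_0).
  assert (0 < INR (fact b')) by (apply INR_fact_lt_0).
  change (fact (S (b' + w'))) with (S (b' + w') * fact (b' + w'))%nat.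
  rewrite mult_INR. field. lra.
Qed.

Lemma BT_p0 r : forall j, BT 0 r j = if Nat.eqb j 0 then 1 else 0.
Proof.
  induction r as [|r IH]; intro j; simpl; [reflexivity|].
  rewrite !IH. ring.
Qed.

Lemma BT_p1 r : forall j, (j <= r)%nat -> BT 1 r j = 1.
Proof.
  induction r as [|r IH]; intros j Hj; simpl.
  - destruct j; [reflexivity|lia].
  - rewrite IH by lia. ring.
Qed.

Lemma div_le a b c d : 0 < b -> 0 < d -> a * d <= c * b -> a / b <= c / d.
Proof.
  intros Hb Hd H.
  replace (a / b) with (a * d * / (b * d)) by (field; lra).
  replace (c / d) with (c * b * / (b * d)) by (field; lra).
  apply Rmult_le_compat_r; [left; apply Rinv_0_lt_compat; nra | exact H].
Qed.

Lemma beta_nonneg w b y : 0 <= y <= 1 -> 0 <= beta_dens w b y.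
Proof.
  intro Hy. unfold beta_dens.
  apply Rmult_le_pos; [apply Rmult_le_pos; apply pow_le; lra|].
  pose proof (INR_fact_lt_0 (w + b - 1)). pose proof (INR_fact_lt_0 (w - 1)).
  pose proof (INR_fact_lt_0 (b - 1)).
  left. apply Rdiv_lt_0_compat; [lra| nra].
Qed.

Lemma beta_pos w b y : 0 < y < 1 -> 0 < beta_dens w b y.
Proof.
  intro Hy. unfold beta_dens.
  apply Rmult_lt_0_compat; [apply Rmult_lt_0_compat; apply pow_lt; lra|].
  pose proof (INR_fact_lt_0 (w + b - 1)). pose proof (INR_fact_lt_0 (w - 1)).
  pose proof (INR_fact_lt_0 (b - 1)).
  apply Rdiv_lt_0_compat; [lra| nra].
Qed.

Lemma beta_cont w b x : continuity_pt (beta_dens w b) x.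
Proof. unfold beta_dens. reg. Qed.

Lemma div_le' a b : 0 < b -> a <= b -> a / b <= 1.
Proof. intros Hb H. replace 1 with (b / b) by (field; lra). apply Rmult_le_compat_r; [left; apply Rinv_0_lt_compat; lra| exact H]. Qed.

Lemma div_lt1 a b : 0 < b -> a < b -> a / b < 1.
Proof. intros Hb H. replace 1 with (b / b) by (field; lra). apply Rmult_lt_compat_r; [apply Rinv_0_lt_compat; lra| exact H]. Qed.

Theorem lemma3p2 (b w n : nat) (hb : (0 < b)%nat) (hw : (0 < w)%nat) (hn : (0 < n)%nat) :
  pclas_beta_coupling_with_bound b w n (INR (b * (4 * w + b + 1)) / 2).
Proof.
  set (m := (b + w - 1)%nat).
  set (F := fun t => BT t m w).
  set (beta := beta_dens w b).
  assert (HFd : forall t, derivable_pt_lim F t (beta t)).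
  { intro t. unfold F, beta. rewrite <- dBT_beta by lia. apply BT_deriv. }
  assert (Fcont : continuity F).
  { intro t. apply derivable_continuous_pt. exists (beta t). apply HFd. }
  assert (F0 : F 0 = 0).
  { unfold F. rewrite BT_p0. destruct (Nat.eqb_spec w 0); [lia|reflexivity]. }
  assert (F1 : F 1 = 1).
  { unfold F. apply BT_p1. unfold m; lia. }
  assert (Fstr : forall x y, 0 <= x -> x < y -> y <= 1 -> F x < F y).
  { intros x y H1 H2 H3.
    destruct (MVT_cor2 F beta x y H2 (fun c _ => HFd c)) as [c [Hc1 Hc2]].
    assert (0 < beta c) by (apply beta_pos; lra). nra. }
  assert (Finv : forall x y, 0 <= x <= 1 -> 0 <= y <= 1 -> F x <= F y -> x <= y).
  { intros x y Hx Hy H. destruct (Rle_or_lt x y) as [|Hlt]; [assumption|].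
    pose proof (Fstr y x ltac:(lra) Hlt ltac:(lra)). lra. }
  assert (Fmono : forall x y, 0 <= x -> x <= y -> y <= 1 -> F x <= F y).
  { intros x y H1 H2 H3. destruct H2 as [H2|H2]; [left; apply Fstr; lra| subst; lra]. }
  set (G := fun k => match k with O => 0 | S j => Cum b w n j end).
  assert (HGb : forall k, 0 <= G k <= 1).
  { intros [|j]; simpl; [lra| apply Cum_bounds; auto]. }
  assert (HGd : forall k, G (S k) - G k = pclas b w n k).
  { intros [|j]; simpl G; unfold Cum; [simpl; ring| rewrite tech5; ring]. }
  assert (HGm : forall k, G k <= G (S k)).
  { intro k. pose proof (HGd k). pose proof (pclas_nonneg b w hb n k). lra. }
  assert (HG : forall k, Rmin (F 0) (F 1) <= G k <= Rmax (F 0) (F 1)).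
  { intro k. rewrite F0, F1, Rmin_left, Rmax_right by lra. apply HGb. }
  pose (tk := fun k => proj1_sig (IVT_gen F 0 1 (G k) Fcont (HG k))).
  assert (Htk : forall k, 0 <= tk k <= 1 /\ F (tk k) = G k).
  { intro k. unfold tk. destruct (IVT_gen F 0 1 (G k) Fcont (HG k)) as [x [Hx1 Hx2]]. simpl.
    rewrite Rmin_left, Rmax_right in Hx1 by lra. auto. }
  assert (tk_mono : forall k, tk k <= tk (S k)).
  { intro k. destruct (Htk k) as [H1 H2]. destruct (Htk (S k)) as [H3 H4].
    apply Finv; auto. rewrite H2, H4. apply HGm. }
  assert (tk0 : tk 0%nat = 0).
  { destruct (Htk 0%nat) as [H1 H2]. simpl in H2.
    assert (tk 0%nat <= 0) by (apply Finv; [auto|lra| rewrite H2, F0; lra]). lra. }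
  assert (tk1 : tk (S (w + n)) = 1).
  { destruct (Htk (S (w+n))) as [H1 H2]. simpl G in H2. rewrite Cum_one in H2 by (auto; lia).
    assert (1 <= tk (S (w+n))) by (apply Finv; [lra|auto| rewrite H2, F1; lra]). lra. }
  set (g := fun k y => if Rle_dec (tk k) y then if Rlt_dec y (tk (S k)) then beta y else 0 else 0).
  exists g. split; [|split; [|split]].
  -
    intros k y. unfold g. destruct (Htk k) as [[H1 H2] _]. destruct (Htk (S k)) as [[H3 H4] _].
    destruct (Rle_dec (tk k) y); [|lra]. destruct (Rlt_dec y (tk (S k))); [|lra].
    apply beta_nonneg. lra.
  -
    intros k Hk.
    destruct (Htk k) as [[H1 H2] H5]. destruct (Htk (S k)) as [[H3 H4] H6].
    pose proof (tk_mono k) as Hm.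
    assert (I1 : is_RInt (g k) 0 (tk k) (scal (tk k - 0) zero)).
    { apply is_RInt_ext with (fun _ => zero); [|apply is_RInt_const].
      intros x Hx. rewrite Rmin_left, Rmax_right in Hx by lra. unfold g.
      destruct (Rle_dec (tk k) x); [lra|reflexivity]. }
    assert (I3 : is_RInt (g k) (tk (S k)) 1 (scal (1 - tk (S k)) zero)).
    { apply is_RInt_ext with (fun _ => zero); [|apply is_RInt_const].
      intros x Hx. rewrite Rmin_left, Rmax_right in Hx by lra. unfold g.
      destruct (Rle_dec (tk k) x); [|reflexivity]. destruct (Rlt_dec x (tk (S k))); [lra|reflexivity]. }
    assert (I2 : is_RInt (g k) (tk k) (tk (S k)) (minus (F (tk (S k))) (F (tk k)))).
    { apply is_RInt_ext with beta.
      - intros x Hx. rewrite Rmin_left, Rmax_right in Hx by lra. unfold g.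
        destruct (Rle_dec (tk k) x); [|lra]. destruct (Rlt_dec x (tk (S k))); [reflexivity|lra].
      - apply (is_RInt_derive (V:=R_CompleteNormedModule) F beta).
        + intros x _. apply is_derive_Reals. apply HFd.
        + intros x _. apply continuity_pt_filterlim. apply beta_cont. }
    assert (I : is_RInt (g k) 0 1 (pclas b w n k)).
    { pose proof (is_RInt_Chasles _ _ _ _ _ _ (is_RInt_Chasles _ _ _ _ _ _ I1 I2) I3) as I.
      rewrite !scal_zero_r, plus_zero_l, plus_zero_r in I.
      replace (pclas b w n k) with (minus (F (tk (S k))) (F (tk k))); [exact I|].
      rewrite H5, H6, <- HGd. reflexivity. }
    assert (Hex : ex_RInt (g k) 0 1) by (eexists; exact I).
    exists (ex_RInt_Reals_0 _ _ _ Hex). rewrite <- RInt_Reals. apply is_RInt_unique. exact I.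
  -
    intros y Hy.
    assert (Hs : forall M, sum_f_R0 (fun k => g k y) M =
              if Rle_dec (tk 0%nat) y then if Rlt_dec y (tk (S M)) then beta y else 0 else 0).
    { induction M as [|M IH]; [reflexivity|].
      rewrite tech5, IH. unfold g.
      pose proof (tk_mono (S M)).
      assert (tk 0%nat <= tk (S M)).
      { clear IH. induction M; [apply tk_mono| pose proof (tk_mono (S M)); lra]. }
      destruct (Rle_dec (tk 0%nat) y); destruct (Rlt_dec y (tk (S M)));
      destruct (Rle_dec (tk (S M)) y); destruct (Rlt_dec y (tk (S (S M)))); try lra. }
    rewrite Hs, tk0, tk1.
    destruct (Rle_dec 0 y); [|lra]. destruct (Rlt_dec y 1); [reflexivity|lra].
  -
    intros k y Hk Hy Hg.
    assert (Hin : tk k <= y < tk (S k)).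
    { unfold g in Hg. destruct (Rle_dec (tk k) y); [|lra]. destruct (Rlt_dec y (tk (S k))); [|lra]. lra. }
    destruct (Htk k) as [[H1 H2] H5]. destruct (Htk (S k)) as [[H3 H4] H6].
    assert (HnR : 0 < INR n) by (apply INR_pos; auto).
    assert (HmR : INR m = INR b + INR w - 1).
    { unfold m. rewrite minus_INR by lia. rewrite plus_INR. simpl. ring. }
    assert (HkR : INR k <= INR w + INR n) by (rewrite <- plus_INR; apply le_INR; lia).
    assert (HbR : 1 <= INR b) by (apply (le_INR 1); lia).
    assert (HwR : 1 <= INR w) by (apply (le_INR 1); lia).
    set (C := INR b + INR w).
    assert (HC : 2 <= C) by (unfold C; lra).
    assert (HCd : C = INR b + INR w) by reflexivity.
    pose proof (pos_INR k) as Hk0.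
    assert (HU : INR n * tk (S k) <= INR k + C).
    { destruct (Rle_or_lt (INR n) (INR k + C)) as [Hc|Hc].
      { assert (INR n * tk (S k) <= INR n * 1) by (apply Rmult_le_compat_l; lra). lra. }
      set (s := (INR k + C) / INR n).
      assert (Hs1 : s < 1) by (unfold s; apply div_lt1; [lra|lra]).
      assert (Hs0 : 0 <= s) by (unfold s; apply Rdiv_le_0_compat; [pose proof (pos_INR k); unfold C; lra| lra]).
      set (pU := INR k / (INR n + 1)).
      assert (HpU : 0 <= pU <= 1).
      { unfold pU. split; [apply Rdiv_le_0_compat; [apply pos_INR| lra]|].
        apply div_le'; lra. }
      assert (HpUs : pU <= s).
      { unfold pU, s. apply div_le; [lra|lra|]. pose proof (pos_INR k). unfold C. nra. }
      assert (Fle : F (tk (S k)) <= F pU).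
      { rewrite H6. simpl G. rewrite (link b w hb hw n k) by (unfold m in *; lia).
        fold m. unfold F. apply D_le_BT; [auto| lia|].
        rewrite plus_INR. unfold pU. right. field. lra. }
      assert (tk (S k) <= s).
      { apply Finv; [lra|lra|]. apply Rle_trans with (F pU); [exact Fle| apply Fmono; lra]. }
      unfold s in *.
      assert (INR n * tk (S k) <= INR n * ((INR k + C) / INR n)) by (apply Rmult_le_compat_l; lra).
      replace (INR n * ((INR k + C) / INR n)) with (INR k + C) in * by (field; lra). lra. }
    assert (HL : INR k - C <= INR n * tk k).
    { destruct (Rlt_or_le (INR k) C) as [Hc|Hc].
      { assert (0 <= INR n * tk k) by (apply Rmult_le_pos; lra). lra. }
      destruct k as [|j]; [simpl in Hc; unfold C in Hc; lra|].
      set (s := (INR (S j) - C) / INR n).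
      assert (Hs0 : 0 <= s) by (unfold s; apply Rdiv_le_0_compat; lra).
      assert (Hs1 : s <= 1) by (unfold s; apply div_le' ; unfold C; lra).
      set (pL := (INR (S j) - INR m) / (INR n + 1)).
      assert (HpL : 0 <= pL <= 1).
      { unfold pL. split; [apply Rdiv_le_0_compat; lra|].
        apply div_le'; lra. }
      assert (HpLs : s <= pL).
      { unfold pL, s. apply div_le; [lra|lra|]. unfold C. rewrite HmR. nra. }
      assert (Fle : F pL <= F (tk (S j))).
      { rewrite H5. simpl G. rewrite (link b w hb hw n j) by (unfold m in *; lia).
        fold m. unfold F. apply BT_le_D; [auto| lia| unfold m in *; lia|].
        rewrite plus_INR. unfold pL. rewrite S_INR in *. right. field. lra. }
      assert (s <= tk (S j)).
      { apply Finv; [lra|lra|]. apply Rle_trans with (F pL); [apply Fmono; lra| exact Fle]. }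
      unfold s in *.
      assert (INR n * ((INR (S j) - C) / INR n) <= INR n * tk (S j)) by (apply Rmult_le_compat_l; lra).
      replace (INR n * ((INR (S j) - C) / INR n)) with (INR (S j) - C) in * by (field; lra). lra. }
    assert (Hc : C < INR (b * (4 * w + b + 1)) / 2).
    { assert (Hnat : (2 * (b + w) < b * (4 * w + b + 1))%nat) by nia.
      apply lt_INR in Hnat. rewrite mult_INR, plus_INR in Hnat.
      replace (INR 2) with 2 in Hnat by (simpl; ring). unfold C. lra. }
    apply Rabs_def1; nra.
Qed.
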